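(* Let $L$ be an ultraparacompact locale with $\bot\neq\top$, $B$ its Boolean algebra of complemented opens, $\mathcal{J}$ the set of partitions of $L$, and $F$ a $B_{\mathcal{J}}$-set with étale space $\sigma\colon E(F)\to L$. Then the space of points $\mathrm{pt}\,E(F)$ is homeomorphic to $\sum_{p\in\mathrm{pt}L}|F|/{\equiv_p}$, where $x\equiv_p y$ iff there is $b\in B$ with $p\in b$ and $x\equiv_b y$, equipped with the topology generated by the subbasic open sets $[x\,|\,b]=\{[x]_p: p\in b\}$ for $x\in|F|$, $b\in B$.
   Context: Partitions of $L$: sets $P$ of opens, pairwise disjoint ($u\wedge v=\bot$ for $u\neq v$), not containing $\bot$, with $\bigvee P=\top$; their members are complemented. $L$ ultraparacompact: every open is a join of complemented opens and every cover is refined by a partition. A $B_{\mathcal{J}}$-set $F$ is a set $|F|$ with binary operations $b(-,-)$ for $b\in B$ satisfying $b(x,x)=x$, $b(b(x,y),z)=b(x,z)$, $b(x,b(y,z))=b(x,z)$, $\top(x,y)=x$, $(\neg b)(x,y)=b(y,x)$, $(b\wedge c)(x,y)=b(c(x,y),y)$, and operations $P\colon|F|^P\to|F|$ for each $P\in\mathcal{J}$ satisfying $P(\lambda b.z)=z$, $P(\lambda b.b(x_b,y_b))=P(\lambda b.x_b)$, $b(P(x),x_b)=x_b$ for $b\in P$. For $b\in B$, $x\equiv_b y$ iff $b(x,y)=y$. $\mathcal{O}(L)$ is a $B_{\mathcal{J}}$-set with $b(u,v)=(b\wedge u)\vee(\neg b\wedge v)$ and $P(\lambda b.u_b)=\bigvee_{b\in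 P}(b\wedge u_b)$. The étale space $E(F)$ is the locale whose frame is the set of $B_{\mathcal{J}}$-set homomorphisms $F\to\mathcal{O}(L)$ ordered pointwise, and $\sigma^{-1}(u)=\mathrm{const}_u$. A point $p$ of $L$ is a frame map $\mathcal{O}(L)\to\{\bot,\top\}$; $p\in b$ means $p(b)=\top$. $[x]_p$ is the $\equiv_p$-class of $x$ in the fibre over $p$. *)

(* Defs.v *)
Unset Implicit Arguments.

Record Frame := {
  fcar :> Type;
  le : fcar -> fcar -> Prop;
  le_refl : forall x, le x x;
  le_trans : forall x y z, le x y -> le y z -> le x z;
  le_antisym : forall x y, le x y -> le y x -> x = y;
  top : fcar;
  bot : fcar;
  meet : fcar -> fcar -> fcar;
  join : (fcar -> Prop) -> fcar;
  top_max : forall x, le x top;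
  bot_min : forall x, le bot x;
  meet_glb : forall x y z, le z (meet x y) <-> (le z x /\ le z y);
  join_lub : forall (S : fcar -> Prop) z, le (join S) z <-> (forall s, S s -> le s z);
  meet_join_distr : forall x (S : fcar -> Prop),
      meet x (join S) = join (fun w => exists s, S s /\ w = meet x s)
}.

Arguments le {f}. Arguments top {f}. Arguments bot {f}.
Arguments meet {f}. Arguments join {f}.

Section FrameDefs.
Variable L : Frame.

Definition join2 (u v : L) : L := join (fun w => w = u \/ w = v).

Definition is_compl (u c : L) : Prop := meet u c = bot /\ join2 u c = top.
Definition complemented (u : L) : Prop := exists c, is_compl u c.

Definition B : Type := {u : L | complemented u}.

Definition is_partitionL (P : L -> Prop) : Prop :=
  (forall u v, P u -> P v -> u <> v -> meet u v = bot) /\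
  (forall u, P u -> u <> bot) /\
  join P = top.

Definition is_partitionB (P : B -> Prop) : Prop :=
  is_partitionL (fun u => exists b : B, P b /\ proj1_sig b = u).

Definition ultraparacompact : Prop :=
  (forall u : L, exists S : L -> Prop, (forall s, S s -> complemented s) /\ join S = u) /\
  (forall C : L -> Prop, join C = top ->
     exists P : L -> Prop, is_partitionL P /\
       (forall u, P u -> exists c, C c /\ le u c)).
End FrameDefs.

(** * Order-theoretic points: maps to {bot,top} = Prop preserving finite meets
    and arbitrary joins *)
Section Points.
Variable T : Type.
Variable R : T -> T -> Prop.
Definition is_top (t : T) := forall s, R s t.
Definition is_glb2 (x y z : T) := R z x /\ R z y /\ (forall w, R w x -> R w y -> R w z).
Definition is_lub (S : T -> Prop) (z : T) :=
  (forall s, S s -> R s z) /\ (forall w, (forall s, S s -> R s w) -> R z w).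
Definition is_point (p : T -> Prop) : Prop :=
  (forall t, is_top t -> p t) /\
  (forall x y z, is_glb2 x y z -> (p z <-> p x /\ p y)) /\
  (forall S z, is_lub S z -> (p z <-> exists s, S s /\ p s)).
End Points.

Record BJset (L : Frame) := {
  bcar :> Type;
  bop : B L -> bcar -> bcar -> bcar;
  Pop : forall P : B L -> Prop, is_partitionB L P -> ({b | P b} -> bcar) -> bcar;
  bop_idem : forall b x, bop b x x = x;
  bop_l : forall b x y z, bop b (bop b x y) z = bop b x z;
  bop_r : forall b x y z, bop b x (bop b y z) = bop b x z;
  bop_top : forall (b : B L) x y, proj1_sig b = top -> bop b x y = x;
  bop_neg : forall (b c : B L) x y, @is_compl L (proj1_sig b) (proj1_sig c) -> bop c x y = bop b y x;
  bop_meet : forall (b c d : B L) x y, proj1_sig d = meet (proj1_sig b) (proj1_sig c) ->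
      bop d x y = bop b (bop c x y) y;
  Pop_const : forall P HP z, Pop P HP (fun _ => z) = z;
  Pop_diag : forall P HP (x y : {b | P b} -> bcar),
      Pop P HP (fun b => bop (proj1_sig b) (x b) (y b)) = Pop P HP x;
  Pop_proj : forall P HP (x : {b | P b} -> bcar) (b : {b | P b}),
      bop (proj1_sig b) (Pop P HP x) (x b) = x b
}.

Arguments bop {L} _. Arguments Pop {L} _.

Section Etale.
Variable L : Frame.
Variable F : BJset L.

Definition is_hom (h : F -> L) : Prop :=
  (forall (b c : B L) x y, @is_compl L (proj1_sig b) (proj1_sig c) ->
     h (bop F b x y) = join2 L (meet (proj1_sig b) (h x)) (meet (proj1_sig c) (h y))) /\
  (forall P HP (x : {b | P b} -> F),
     h (Pop F P HP x) = join (fun w => exists i : {b | P b},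
                                 w = meet (proj1_sig (proj1_sig i)) (h (x i)))).

(** The frame of the etale space E(F), ordered pointwise *)
Definition Ehom : Type := {h : F -> L | is_hom h}.
Definition Ele (h k : Ehom) : Prop := forall x, le (proj1_sig h x) (proj1_sig k x).

Definition ptL : Type := {p : L -> Prop | is_point L (@le L) p}.
Definition ptE : Type := {P : Ehom -> Prop | is_point Ehom Ele P}.

Definition opens_ptE (U : ptE -> Prop) : Prop :=
  exists h : Ehom, forall P, U P <-> proj1_sig P h.

Definition equivp (p : ptL) (x y : F) : Prop :=
  exists b : B L, proj1_sig p (proj1_sig b) /\ bop F b x y = y.
Definition cls (p : ptL) (x : F) : F -> Prop := fun y => equivp p x y.

Definition SumSp : Type :=
  {pc : ptL * (F -> Prop) | exists x : F, snd pc = cls (fst pc) x}.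

Definition subbasic (U : SumSp -> Prop) : Prop :=
  exists (x : F) (b : B L), forall s : SumSp,
    U s <-> (proj1_sig (fst (proj1_sig s)) (proj1_sig b) /\
             snd (proj1_sig s) = cls (fst (proj1_sig s)) x).
End Etale.

Inductive gen_open (T : Type) (S : (T -> Prop) -> Prop) : (T -> Prop) -> Prop :=
| go_sub U : S U -> gen_open T S U
| go_top : gen_open T S (fun _ => True)
| go_inter U V : gen_open T S U -> gen_open T S V -> gen_open T S (fun t => U t /\ V t)
| go_union (G : (T -> Prop) -> Prop) :
    (forall U, G U -> gen_open T S U) -> gen_open T S (fun t => exists U, G U /\ U t)
| go_ext U V : gen_open T S U -> (forall t, U t <-> V t) -> gen_open T S V.

Definition homeomorphism (X Y : Type) (OX : (X -> Prop) -> Prop) (OY : (Y -> Prop) -> Prop)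
  (f : X -> Y) : Prop :=
  (forall a b, f a = f b -> a = b) /\ (forall y, exists x, f x = y) /\
  (forall U : Y -> Prop, OY U <-> OX (fun x => U (f x))).

(* Main.v *)
Require Import Defs.
From Stdlib Require Import ProofIrrelevance FunctionalExtensionality PropExtensionality.

Lemma lm_l {L : Frame} (x y : L) : le (meet x y) x.
Proof. apply (proj1 (meet_glb L x y (meet x y))), le_refl. Qed.
Lemma lm_r {L : Frame} (x y : L) : le (meet x y) y.
Proof. apply (proj1 (meet_glb L x y (meet x y))), le_refl. Qed.
Lemma lm_glb {L : Frame} (x y z : L) : le z x -> le z y -> le z (meet x y).
Proof. intros; apply meet_glb; auto. Qed.
Lemma ltr {L : Frame} (x y z : L) : le x y -> le y z -> le x z.
Proof. apply le_trans. Qed.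
Lemma lj_ub {L : Frame} (S : L -> Prop) s : S s -> le s (join S).
Proof. intros H; apply (proj1 (join_lub L S (join S)) (le_refl _ _)); auto. Qed.
Lemma lj_lub {L : Frame} (S : L -> Prop) z : (forall s, S s -> le s z) -> le (join S) z.
Proof. apply join_lub. Qed.
Lemma meet_comm {L : Frame} (x y : L) : meet x y = meet y x.
Proof. apply le_antisym; apply lm_glb; (apply lm_l || apply lm_r). Qed.
Lemma meet_le {L : Frame} (x y : L) : le x y -> meet x y = x.
Proof. intros; apply le_antisym. apply lm_l. apply lm_glb; auto. apply le_refl. Qed.
Lemma meet_top {L : Frame} (x : L) : meet x top = x.
Proof. apply meet_le, top_max. Qed.
Lemma meet_mono {L : Frame} (a b c d : L) : le a c -> le b d -> le (meet a b) (meet c d).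
Proof. intros; apply lm_glb; [eapply ltr; [apply lm_l|auto] | eapply ltr; [apply lm_r|auto]]. Qed.
Lemma bot_eq {L : Frame} (x : L) : le x bot -> x = bot.
Proof. intros; apply le_antisym; auto; apply bot_min. Qed.
Lemma top_eq {L : Frame} (x : L) : le top x -> x = top.
Proof. intros; apply le_antisym; auto; apply top_max. Qed.
Lemma j2_l {L : Frame} (x y : L) : le x (join2 L x y).
Proof. apply lj_ub; auto. Qed.
Lemma j2_r {L : Frame} (x y : L) : le y (join2 L x y).
Proof. apply lj_ub; auto. Qed.
Lemma j2_lub {L : Frame} (x y z : L) : le x z -> le y z -> le (join2 L x y) z.
Proof. intros; apply lj_lub; intros s [->| ->]; auto. Qed.
Lemma distr2 {L : Frame} (a x y : L) : meet a (join2 L x y) = join2 L (meet a x) (meet a y).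
Proof.
  unfold join2 at 1; rewrite meet_join_distr. apply le_antisym.
  - apply lj_lub; intros s [t [[-> | ->] ->]]; [apply j2_l|apply j2_r].
  - apply j2_lub; apply lj_ub; eauto.
Qed.
Lemma meet_j2_le {L : Frame} (a b c X : L) :
  le (meet a c) X -> le (meet b c) X -> le (meet (join2 L a b) c) X.
Proof. intros; rewrite meet_comm, distr2, (meet_comm c a), (meet_comm c b); apply j2_lub; auto. Qed.
Lemma meet_join_le {L : Frame} (a : L) (S : L -> Prop) X :
  (forall s, S s -> le (meet a s) X) -> le (meet a (join S)) X.
Proof. intros H; rewrite meet_join_distr; apply lj_lub; intros w [s [Hs ->]]; auto. Qed.
Lemma le_meet_join {L : Frame} (a : L) (S : L -> Prop) s : S s -> le (meet a s) (meet a (join S)).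
Proof. intros; apply meet_mono; [apply le_refl| apply lj_ub; auto]. Qed.

Lemma compl_sym {L : Frame} (u c : L) : is_compl L u c -> is_compl L c u.
Proof.
  intros [H1 H2]; split. rewrite meet_comm; auto.
  apply top_eq; rewrite <- H2; apply j2_lub; [apply j2_r|apply j2_l].
Qed.

Lemma compl_meet {L : Frame} (b b' d d' : L) : is_compl L b b' -> is_compl L d d' ->
  is_compl L (meet b d) (join2 L b' d').
Proof.
  intros [Hb1 Hb2] [Hd1 Hd2]; split.
  - apply bot_eq. rewrite meet_comm. apply meet_j2_le.
    + rewrite <- Hb1. apply lm_glb. eapply ltr; [apply lm_r|apply lm_l]. apply lm_l.
    + rewrite <- Hd1. apply lm_glb. eapply ltr; [apply lm_r|apply lm_r]. apply lm_l.
  - apply top_eq. eapply ltr with (y := meet (join2 L b b') (join2 L d d')).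
    { rewrite Hb2, Hd2, meet_top; apply le_refl. }
    apply meet_j2_le.
    + rewrite meet_comm. apply meet_j2_le.
      * rewrite meet_comm. apply j2_l.
      * eapply ltr; [apply lm_l|]. eapply ltr; [apply j2_r|]. apply j2_r.
    + eapply ltr; [apply lm_l|]. eapply ltr; [apply j2_l|]. apply j2_r.
Qed.

Lemma compl_top {L : Frame} : complemented L top.
Proof. exists bot; split. apply bot_eq, lm_r. apply top_eq, j2_l. Qed.

Definition Btop (L : Frame) : B L := exist _ top compl_top.
Lemma complemented_meet {L : Frame} (b d : L) : complemented L b -> complemented L d -> complemented L (meet b d).
Proof. intros [b' Hb] [d' Hd]; eexists; apply compl_meet; eauto. Qed.
Definition Bmeet {L : Frame} (b d : B L) : B L :=
  exist _ (meet (proj1_sig b) (proj1_sig d)) (complemented_meet _ _ (proj2_sig b) (proj2_sig d)).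

Definition eqv {L : Frame} (F : BJset L) (b : B L) (x y : F) := bop F b x y = y.

Lemma eqv_refl {L} (F : BJset L) b x : eqv F b x x.
Proof. apply bop_idem. Qed.
Lemma eqv_sym {L} (F : BJset L) b x y : eqv F b x y -> eqv F b y x.
Proof. unfold eqv; intros H. rewrite <- H at 1. rewrite bop_l. apply bop_idem. Qed.
Lemma eqv_subst {L} (F : BJset L) b x y z : eqv F b x y -> bop F b x z = bop F b y z.
Proof. unfold eqv; intros H. rewrite <- H, bop_l. reflexivity. Qed.
Lemma eqv_mono {L} (F : BJset L) (b c : B L) x y : le (proj1_sig c) (proj1_sig b) ->
  eqv F b x y -> eqv F c x y.
Proof.
  unfold eqv; intros Hle H.
  rewrite (bop_meet L F c b c x y); [rewrite H; apply bop_idem|].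
  symmetry; apply meet_le; auto.
Qed.
Lemma eqv_trans {L} (F : BJset L) (b d c : B L) x y z :
  le (proj1_sig c) (proj1_sig b) -> le (proj1_sig c) (proj1_sig d) ->
  eqv F b x y -> eqv F d y z -> eqv F c x z.
Proof.
  intros H1 H2 E1 E2. apply (eqv_mono F b c) in E1; auto. apply (eqv_mono F d c) in E2; auto.
  unfold eqv in *. rewrite (eqv_subst F c x y z); auto.
Qed.

Definition ee {L} (F : BJset L) (x y : F) : L :=
  join (fun u => exists c : B L, proj1_sig c = u /\ eqv F c x y).

Lemma ee_refl {L} (F : BJset L) x : ee F x x = top.
Proof. apply top_eq, lj_ub. exists (Btop L); split; auto. apply eqv_refl. Qed.

Lemma ee_ub {L} (F : BJset L) (c : B L) x y : eqv F c x y -> le (proj1_sig c) (ee F x y).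
Proof. intros; apply lj_ub; eauto. Qed.

Definition local {L : Frame} (F : BJset L) (g : F -> L) : Prop :=
  forall (b : B L) y z, eqv F b y z -> meet (proj1_sig b) (g y) = meet (proj1_sig b) (g z).

Lemma local_hom {L} (F : BJset L) g : local F g -> is_hom L F g.
Proof.
  intros Hl; split.
  - intros b c x y Hc. set (w := bop F b x y).
    assert (E1 : eqv F b x w) by (unfold eqv, w; apply bop_r).
    assert (E2 : eqv F c y w).
    { unfold eqv, w. rewrite (bop_neg L F b c y (bop F b x y)); auto. rewrite bop_l; reflexivity. }
    rewrite <- (meet_top (g w)). rewrite <- (proj2 Hc), distr2.
    rewrite (meet_comm _ (proj1_sig b)), (meet_comm _ (proj1_sig c)).
    rewrite (Hl b x w), (Hl c y w); auto.
  - intros P HP x. rewrite <- (meet_top (g (Pop F P HP x))).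
    rewrite <- (proj2 (proj2 HP)) at 1. rewrite meet_join_distr.
    apply le_antisym.
    + apply lj_lub; intros w [s [[b [Pb <-]] ->]]. apply lj_ub.
      exists (exist _ b Pb); simpl. rewrite meet_comm.
      apply Hl. unfold eqv. apply (Pop_proj L F P _ x (exist _ b Pb)).
    + apply lj_lub; intros w [[b Pb] ->]. apply lj_ub. exists (proj1_sig b); split; [exists b; auto|].
      simpl. rewrite (meet_comm (g _)). symmetry. apply Hl.
      unfold eqv. apply (Pop_proj L F P _ x (exist _ b Pb)).
Qed.

Lemma hom_local {L} (F : BJset L) g : is_hom L F g -> local F g.
Proof.
  intros [Hb _] b y z E. destruct (proj2_sig b) as [c0 Hc0].
  assert (Cc : complemented L c0) by (exists (proj1_sig b); apply compl_sym; auto).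
  pose (c := exist _ c0 Cc : B L).
  pose proof (Hb b c y z Hc0) as H. unfold eqv in E. rewrite E in H. simpl in H.
  rewrite H. symmetry.
  rewrite distr2. apply le_antisym.
  - apply j2_lub; [|]. apply lm_glb. apply lm_l. eapply ltr; [apply lm_r|apply lm_r].
    eapply ltr; [|apply bot_min]. destruct Hc0 as [Hc0 _]. rewrite <- Hc0.
    apply lm_glb. apply lm_l. eapply ltr; [apply lm_r|apply lm_l].
  - eapply ltr; [|apply j2_l]. apply lm_glb. apply lm_l. apply le_refl.
Qed.

Lemma ee_local {L} (F : BJset L) x : local F (ee F x).
Proof.
  assert (K : forall (b : B L) y z, eqv F b y z -> le (meet (proj1_sig b) (ee F x y)) (meet (proj1_sig b) (ee F x z))).
  { intros b y z E. apply meet_join_le. intros s [c [<- Ec]]. apply lm_glb. apply lm_l.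
    apply (ee_ub F (Bmeet b c)). apply (eqv_trans F c b (Bmeet b c) x y z); simpl; auto using lm_l, lm_r. }
  intros b y z E. apply le_antisym; apply K; auto. apply eqv_sym; auto.
Qed.

Definition hv {L} {F : BJset L} (h : Ehom L F) : F -> L := proj1_sig h.

Lemma Ehom_eq {L} {F : BJset L} (g k : Ehom L F) : (forall y, hv g y = hv k y) -> g = k.
Proof.
  destruct g as [g Hg], k as [k Hk]; unfold hv; simpl; intros H.
  assert (g = k) by (apply functional_extensionality; auto). subst. f_equal. apply proof_irrelevance.
Qed.

Lemma hv_local {L} {F : BJset L} (h : Ehom L F) : local F (hv h).
Proof. apply hom_local, (proj2_sig h). Qed.

Lemma const_local {L} (F : BJset L) (u : L) : local F (fun _ => u).
Proof. intros b y z _; reflexivity. Qed.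
Definition consth {L} (F : BJset L) (u : L) : Ehom L F :=
  exist _ (fun _ => u) (local_hom F _ (const_local F u)).

Lemma meet_local {L} (F : BJset L) (g k : F -> L) : local F g -> local F k ->
  local F (fun y => meet (g y) (k y)).
Proof.
  intros Hg Hk.
  assert (K : forall b y z, eqv F b y z -> le (meet (proj1_sig b) (meet (g y) (k y)))
                                           (meet (proj1_sig b) (meet (g z) (k z)))).
  { intros b y z E. apply lm_glb; [apply lm_l|apply lm_glb].
    - eapply ltr; [|apply (lm_r (proj1_sig b))]. rewrite <- (Hg b y z E).
      apply meet_mono; [apply le_refl|apply lm_l].
    - eapply ltr; [|apply (lm_r (proj1_sig b))]. rewrite <- (Hk b y z E).
      apply meet_mono; [apply le_refl|apply lm_r]. }
  intros b y z E; apply le_antisym; apply K; auto; apply eqv_sym; auto.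
Qed.
Definition meeth {L} {F : BJset L} (h k : Ehom L F) : Ehom L F :=
  exist _ (fun y => meet (hv h y) (hv k y))
    (local_hom F _ (meet_local F _ _ (hv_local h) (hv_local k))).

Definition joinf {L} {F : BJset L} (S : Ehom L F -> Prop) (y : F) : L :=
  join (fun v => exists h, S h /\ v = hv h y).
Lemma join_local {L} (F : BJset L) (S : Ehom L F -> Prop) : local F (joinf S).
Proof.
  assert (K : forall b y z, eqv F b y z -> le (meet (proj1_sig b) (joinf S y))
                                           (meet (proj1_sig b) (joinf S z))).
  { intros b y z E. apply meet_join_le. intros s [h [Hh ->]].
    rewrite (hv_local h b y z E). apply le_meet_join. eauto. }
  intros b y z E; apply le_antisym; apply K; auto; apply eqv_sym; auto.
Qed.
Definition joinh {L} {F : BJset L} (S : Ehom L F -> Prop) : Ehom L F :=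
  exist _ (joinf S) (local_hom F _ (join_local F S)).

Definition exh {L} (F : BJset L) (x : F) : Ehom L F :=
  exist _ (ee F x) (local_hom F _ (ee_local F x)).

Lemma consth_top {L} (F : BJset L) : is_top (Ehom L F) (Ele L F) (consth F top).
Proof. intros s y; apply top_max. Qed.
Lemma meeth_glb {L} (F : BJset L) (h k : Ehom L F) : is_glb2 (Ehom L F) (Ele L F) h k (meeth h k).
Proof.
  split; [|split]; intros; try intro y; simpl; try apply lm_l; try apply lm_r.
  apply lm_glb; auto.
Qed.
Lemma joinh_lub {L} (F : BJset L) (S : Ehom L F -> Prop) : is_lub (Ehom L F) (Ele L F) S (joinh S).
Proof.
  split.
  - intros s Hs y; simpl. apply lj_ub; eauto.
  - intros w Hw y; simpl. apply lj_lub. intros v [h [Hh ->]]. apply Hw; auto.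
Qed.



Lemma P_top {L} {F : BJset L} (P : ptE L F) : proj1_sig P (consth F top).
Proof. apply (proj1 (proj2_sig P)), consth_top. Qed.
Lemma P_meet {L} {F : BJset L} (P : ptE L F) h k :
  proj1_sig P (meeth h k) <-> proj1_sig P h /\ proj1_sig P k.
Proof. apply (proj1 (proj2 (proj2_sig P))), meeth_glb. Qed.
Lemma P_join {L} {F : BJset L} (P : ptE L F) S :
  proj1_sig P (joinh S) <-> exists h, S h /\ proj1_sig P h.
Proof. apply (proj2 (proj2 (proj2_sig P))), joinh_lub. Qed.
Lemma P_mono {L} {F : BJset L} (P : ptE L F) h k : Ele L F h k -> proj1_sig P h -> proj1_sig P k.
Proof.
  intros Hle Hh. assert (E : meeth h k = h).
  { apply Ehom_eq; intros y; simpl. apply meet_le, Hle. }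
  rewrite <- E in Hh. apply P_meet in Hh; tauto.
Qed.

Lemma p_top {L : Frame} (p : L -> Prop) : is_point L le p -> p top.
Proof. intros Hp; apply (proj1 Hp); intros s; apply top_max. Qed.
Lemma p_meet {L : Frame} (p : L -> Prop) : is_point L le p -> forall x y, p (meet x y) <-> p x /\ p y.
Proof.
  intros Hp x y; apply (proj1 (proj2 Hp)). split; [apply lm_l|split; [apply lm_r|]].
  intros; apply lm_glb; auto.
Qed.
Lemma p_join {L : Frame} (p : L -> Prop) : is_point L le p -> forall S, p (join S) <-> exists s, S s /\ p s.
Proof.
  intros Hp S; apply (proj2 (proj2 Hp)). split; [intros; apply lj_ub; auto|intros; apply lj_lub; auto].
Qed.
Lemma p_mono {L : Frame} (p : L -> Prop) : is_point L le p -> forall x y, le x y -> p x -> p y.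
Proof. intros Hp x y H Hx. rewrite <- (meet_le x y H) in Hx. apply (p_meet p Hp) in Hx; tauto. Qed.

Lemma glb_pw {L} {F : BJset L} (h k m : Ehom L F) :
  is_glb2 (Ehom L F) (Ele L F) h k m -> forall y, hv m y = meet (hv h y) (hv k y).
Proof.
  intros [H1 [H2 H3]] y. apply le_antisym.
  - apply lm_glb; [apply H1|apply H2].
  - apply (H3 (meeth h k)); apply meeth_glb.
Qed.
Lemma lub_pw {L} {F : BJset L} (S : Ehom L F -> Prop) m :
  is_lub (Ehom L F) (Ele L F) S m -> forall y, hv m y = joinf S y.
Proof.
  intros [H1 H2] y. apply le_antisym.
  - apply (H2 (joinh S)). apply joinh_lub.
  - apply (proj2 (joinh_lub F S)); auto.
Qed.

Lemma ptof_point {L} {F : BJset L} (P : ptE L F) :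
  is_point L le (fun u => proj1_sig P (consth F u)).
Proof.
  split; [|split].
  - intros t Ht. assert (t = top) by (apply top_eq, Ht). subst. apply P_top.
  - intros x y z [H1 [H2 H3]]. apply (proj1 (proj2 (proj2_sig P))).
    split; [intros w; apply H1|split; [intros w; apply H2|]].
    intros w Hx Hy v. apply H3; [apply Hx|apply Hy].
  - intros S z [H1 H2].
    assert (HL : is_lub (Ehom L F) (Ele L F) (fun h => exists s, S s /\ h = consth F s) (consth F z)).
    { split.
      - intros h [s [Hs ->]] y; apply H1; auto.
      - intros w Hw y. apply H2. intros s Hs. apply (Hw (consth F s)); eauto. }
    rewrite (proj2 (proj2 (proj2_sig P)) _ _ HL). split.
    + intros [h [[s [Hs ->]] Hh]]; eauto.
    + intros [s [Hs Hh]]; eauto.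
Qed.

Definition pt_of {L} {F : BJset L} (P : ptE L F) : ptL L :=
  exist _ (fun u => proj1_sig P (consth F u)) (ptof_point P).

Lemma pt_point {L : Frame} (p : ptL L) : is_point L le (proj1_sig p).
Proof. apply (proj2_sig p). Qed.

Lemma D_lemma {L} {F : BJset L} (P : ptE L F) (h : Ehom L F) :
  proj1_sig P h <-> exists x, proj1_sig P (exh F x) /\ proj1_sig (pt_of P) (hv h x).
Proof.
  assert (HL : is_lub (Ehom L F) (Ele L F)
                 (fun g => exists x, g = meeth (exh F x) (consth F (hv h x))) h).
  { split.
    - intros g [x ->] y; simpl. rewrite meet_comm. unfold ee. apply meet_join_le.
      intros s [c [<- Ec]]. rewrite meet_comm. rewrite (hv_local h c x y Ec). apply lm_r.
    - intros w Hw y. eapply ltr; [|apply (Hw _ (ex_intro _ y eq_refl))]. simpl.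
      rewrite ee_refl, meet_comm, meet_top. apply le_refl. }
  rewrite (proj2 (proj2 (proj2_sig P)) _ _ HL). split.
  - intros [g [[x ->] Hg]]. apply P_meet in Hg. simpl. eauto.
  - intros [x [H1 H2]]. exists (meeth (exh F x) (consth F (hv h x))). split; eauto.
    apply P_meet; auto.
Qed.

Lemma ee_tr {L} (F : BJset L) x y z : le (meet (ee F x z) (ee F y z)) (ee F x y).
Proof.
  apply meet_join_le. intros s [c' [<- Ec']]. rewrite meet_comm. apply meet_join_le.
  intros s [c [<- Ec]]. apply (ee_ub F (Bmeet c' c)).
  apply (eqv_trans F c c' (Bmeet c' c) x z y); simpl; auto using lm_l, lm_r. apply eqv_sym; auto.
Qed.

Lemma W_lemma {L} {F : BJset L} (P : ptE L F) x y : proj1_sig P (exh F x) ->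
  (proj1_sig P (exh F y) <-> equivp L F (pt_of P) x y).
Proof.
  intros Hx; split.
  - intros Hy. assert (H : proj1_sig P (meeth (exh F x) (exh F y))) by (apply P_meet; auto).
    apply (P_mono P _ (consth F (ee F x y))) in H; [|intros z; apply ee_tr].
    change (proj1_sig (pt_of P) (ee F x y)) in H.
    apply (p_join _ (pt_point (pt_of P))) in H. destruct H as [s [[c [<- Ec]] Hc]].
    exists c; split; auto.
  - intros [b [Hb Eb]].
    assert (H : proj1_sig P (meeth (exh F x) (consth F (proj1_sig b)))) by (apply P_meet; auto).
    apply (P_mono P _ (exh F y)) in H; auto.
    intros z; simpl. rewrite meet_comm. apply meet_join_le. intros s [c [<- Ec]].
    apply (ee_ub F (Bmeet b c)). apply (eqv_trans F b c (Bmeet b c) y x z); simpl; auto using lm_l, lm_r.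
    apply eqv_sym; auto.
Qed.

Lemma ex_exists {L} {F : BJset L} (P : ptE L F) : exists x, proj1_sig P (exh F x).
Proof.
  assert (H : proj1_sig P (joinh (fun h => exists x, h = exh F x))).
  { apply (P_mono P (consth F top)); [|apply P_top]. intros y; simpl.
    rewrite <- (ee_refl F y). apply lj_ub. exists (exh F y); split; eauto. }
  apply P_join in H. destruct H as [h [[x ->] Hh]]; eauto.
Qed.

Lemma equivp_refl {L} {F : BJset L} (p : ptL L) x : equivp L F p x x.
Proof. exists (Btop L); split. exact (p_top _ (pt_point p)). apply bop_idem. Qed.
Lemma equivp_sym {L} {F : BJset L} (p : ptL L) x y : equivp L F p x y -> equivp L F p y x.
Proof. intros [b [Hb E]]; exists b; split; auto. apply eqv_sym, E. Qed.
Lemma equivp_trans {L} {F : BJset L} (p : ptL L) x y z :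
  equivp L F p x y -> equivp L F p y z -> equivp L F p x z.
Proof.
  intros [b [Hb E]] [c [Hc E']]. exists (Bmeet b c); split.
  - simpl. apply (p_meet _ (pt_point p)); auto.
  - apply (eqv_trans F b c (Bmeet b c) x y z); simpl; auto using lm_l, lm_r.
Qed.

Definition clsP {L} {F : BJset L} (P : ptE L F) : F -> Prop := fun y => proj1_sig P (exh F y).

Lemma cls_iff {L} {F : BJset L} (P : ptE L F) x :
  clsP P = cls L F (pt_of P) x <-> proj1_sig P (exh F x).
Proof.
  split.
  - intros E. pose proof (f_equal (fun f => f x) E) as E'. simpl in E'. unfold clsP in E'.
    rewrite E'. apply equivp_refl.
  - intros Hx. apply functional_extensionality; intros y. apply propositional_extensionality.
    unfold clsP, cls. apply W_lemma; auto.
Qed.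

Lemma fmap_ok {L} {F : BJset L} (P : ptE L F) :
  exists x, snd (pt_of P, clsP P) = cls L F (fst (pt_of P, clsP P)) x.
Proof. destruct (ex_exists P) as [x Hx]. exists x; simpl. apply cls_iff; auto. Qed.

Definition fmap {L} {F : BJset L} (P : ptE L F) : SumSp L F :=
  exist _ (pt_of P, clsP P) (fmap_ok P).

Lemma fmap_inj {L} {F : BJset L} (P Q : ptE L F) : fmap P = fmap Q -> P = Q.
Proof.
  intros E.
  assert (E1 : pt_of P = pt_of Q) by exact (f_equal (fun s => fst (proj1_sig s)) E).
  assert (E2 : clsP P = clsP Q) by exact (f_equal (fun s => snd (proj1_sig s)) E).
  assert (H : forall h, proj1_sig P h <-> proj1_sig Q h).
  { intros h. rewrite (D_lemma P h), (D_lemma Q h), E1.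
    split; intros [x [H1 H2]]; exists x; split; auto.
    - change (clsP Q x). rewrite <- E2. exact H1.
    - change (clsP P x). rewrite E2. exact H1. }
  destruct P as [P HP], Q as [Q HQ]. simpl in H.
  assert (P = Q) by (apply functional_extensionality; intros; apply propositional_extensionality; auto).
  subst. f_equal. apply proof_irrelevance.
Qed.

Lemma surj_point {L} {F : BJset L} (p : ptL L) (x0 : F) :
  is_point (Ehom L F) (Ele L F)
    (fun h => exists x, equivp L F p x0 x /\ proj1_sig p (hv h x)).
Proof.
  pose proof (pt_point p) as Hp. split; [|split].
  - intros t Ht. exists x0; split; [apply equivp_refl|].
    assert (E : hv t x0 = top) by (apply top_eq, (Ht (consth F top))). rewrite E. apply p_top; auto.
  - intros h k m Hg. split.
    + intros [x [Ex Hm]]. rewrite (glb_pw h k m Hg) in Hm. apply (p_meet _ Hp) in Hm.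
      split; exists x; tauto.
    + intros [[x [Ex Hh]] [x' [Ex' Hk]]]. exists x; split; auto.
      rewrite (glb_pw h k m Hg). apply (p_meet _ Hp); split; auto.
      assert (Exx : equivp L F p x x') by (eapply equivp_trans; [apply equivp_sym|]; eauto).
      destruct Exx as [b [Hb Eb]].
      assert (H : proj1_sig p (meet (proj1_sig b) (hv k x'))) by (apply (p_meet _ Hp); auto).
      rewrite <- (hv_local k b x x' Eb) in H. apply (p_meet _ Hp) in H. tauto.
  - intros S m Hl. split.
    + intros [x [Ex Hm]]. rewrite (lub_pw S m Hl) in Hm. unfold joinf in Hm.
      apply (p_join _ Hp) in Hm. destruct Hm as [v [[h [Hh ->]] Hv]]. eauto.
    + intros [h [Hh [x [Ex Hx]]]]. exists x; split; auto.
      apply (p_mono _ Hp (hv h x)); auto. apply (proj1 Hl h Hh).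
Qed.

Lemma fmap_surj {L} {F : BJset L} (s : SumSp L F) : exists P, fmap P = s.
Proof.
  destruct s as [[p C] HC]. pose proof HC as [x0 Hx0]. simpl in Hx0.
  pose proof (pt_point p) as Hp.
  exists (exist _ _ (surj_point p x0)).
  assert (E1 : pt_of (exist _ _ (surj_point p x0)) = p).
  { apply eq_sig_hprop; [intros; apply proof_irrelevance|]. simpl.
    apply functional_extensionality; intros u; apply propositional_extensionality; split.
    - intros [x [_ H]]; auto.
    - intros H; exists x0; split; auto. apply equivp_refl. }
  unfold fmap. apply eq_sig_hprop; [intros; apply proof_irrelevance|]. simpl.
  rewrite E1. f_equal. rewrite Hx0. unfold clsP, cls; simpl.
  apply functional_extensionality; intros y; apply propositional_extensionality; split.
  - intros [x [Ex Hy]]. apply (p_join _ Hp) in Hy. destruct Hy as [s [[c [<- Ec]] Hc]].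
    eapply equivp_trans; [exact Ex|]. exists c; split; auto. apply eqv_sym; auto.
  - intros Ey. exists y; split; auto. simpl. rewrite ee_refl. apply p_top; auto.
Qed.

Lemma sub_iff {L} {F : BJset L} (P : ptE L F) x (b : B L) :
  (proj1_sig (fst (proj1_sig (fmap P))) (proj1_sig b) /\
   snd (proj1_sig (fmap P)) = cls L F (fst (proj1_sig (fmap P))) x)
  <-> proj1_sig P (meeth (exh F x) (consth F (proj1_sig b))).
Proof.
  simpl. rewrite P_meet, cls_iff. tauto.
Qed.

Lemma forward {L} {F : BJset L} (U : SumSp L F -> Prop) :
  gen_open (SumSp L F) (subbasic L F) U -> opens_ptE L F (fun P => U (fmap P)).
Proof.
  induction 1.
  - destruct H as [x [b HU]]. exists (meeth (exh F x) (consth F (proj1_sig b))).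
    intros P. rewrite HU. apply sub_iff.
  - exists (consth F top). intros P; split; auto. intros; apply P_top.
  - destruct IHgen_open1 as [h1 H1], IHgen_open2 as [h2 H2]. exists (meeth h1 h2).
    intros P. rewrite P_meet, H1, H2. tauto.
  - exists (joinh (fun h => exists U, G U /\ forall P, U (fmap P) <-> proj1_sig P h)).
    intros P. rewrite P_join. split.
    + intros [U [HG HU]]. destruct (H0 U HG) as [h Hh]. exists h; split.
      * exists U; split; auto.
      * apply Hh; auto.
    + intros [h [[U [HG HU]] Hh]]. exists U; split; auto. apply HU; auto.
  - destruct IHgen_open as [h Hh]. exists h. intros P. rewrite <- H0. apply Hh.
Qed.

Lemma backward {L} {F : BJset L} (U : SumSp L F -> Prop) : ultraparacompact L ->
  opens_ptE L F (fun P => U (fmap P)) -> gen_open (SumSp L F) (subbasic L F) U.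
Proof.
  intros [UP _] [h Hh].
  set (G := fun W : SumSp L F -> Prop => exists x (b : B L), le (proj1_sig b) (hv h x) /\
     W = (fun s => proj1_sig (fst (proj1_sig s)) (proj1_sig b) /\
                   snd (proj1_sig s) = cls L F (fst (proj1_sig s)) x)).
  apply go_ext with (U := fun s => exists W, G W /\ W s).
  - apply go_union. intros W [x [b [_ ->]]]. apply go_sub. exists x, b. intros; reflexivity.
  - intros s. destruct (fmap_surj s) as [P <-]. rewrite Hh, D_lemma. split.
    + intros [W [[x [b [Hle ->]]] HW]]. apply sub_iff, P_meet in HW. destruct HW as [H1 H2].
      exists x; split; auto. apply (p_mono _ (pt_point (pt_of P)) (proj1_sig b)); auto.
    + intros [x [H1 H2]]. destruct (UP (hv h x)) as [S [HS HJ]].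
      rewrite <- HJ in H2. apply (p_join _ (pt_point (pt_of P))) in H2.
      destruct H2 as [s [Ss Hs]].
      exists (fun s0 => proj1_sig (fst (proj1_sig s0)) (proj1_sig (exist _ s (HS s Ss) : B L)) /\
                   snd (proj1_sig s0) = cls L F (fst (proj1_sig s0)) x).
      split.
      * exists x, (exist _ s (HS s Ss)). split; auto. simpl. rewrite <- HJ. apply lj_ub; auto.
      * apply sub_iff, P_meet. split; auto.
Qed.

Theorem proposition2p20 (L : Frame) (F : BJset L) :
  ultraparacompact L -> (@bot L) <> (@top L) ->
  exists f : ptE L F -> SumSp L F,
    homeomorphism (ptE L F) (SumSp L F) (opens_ptE L F) (gen_open (SumSp L F) (subbasic L F)) f.
Proof.
  intros HU _. exists fmap. split; [|split].
  - apply fmap_inj.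
  - apply fmap_surj.
  - intros U; split; [apply forward|apply backward; auto].
Qed.
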